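(* The normalizer of $\operatorname{PC}^{+}$ in $\operatorname{PC}^{\bowtie}$ is $\operatorname{PC}^{\pm}$.
   Context: $X=[0,1[$. $\widehat{\operatorname{PC}^{\bowtie}}$ is the group of bijections $X\to X$ continuous outside a finite subset; $\widehat{\operatorname{PC}^{+}}$ is the subgroup of those $h$ for which there is a finite partition of $X$ into intervals $[a,b[$ with $h$ continuous and increasing on each $]a,b[$. With ${\mathfrak S}_{\mathrm{fin}}$ the normal subgroup of finitely supported permutations, $\operatorname{PC}^{\bowtie}=\widehat{\operatorname{PC}^{\bowtie}}/{\mathfrak S}_{\mathrm{fin}}$ and $\operatorname{PC}^{+}=\widehat{\operatorname{PC}^{+}}/{\mathfrak S}_{\mathrm{fin}}$. Let $\mathcal R\in\operatorname{PC}^{\bowtie}$ be the class of any bijection of $X$ agreeing with $x\mapsto 1-x$ outside a finite set. Define $\operatorname{PC}^{-}=\mathcal R\cdot\operatorname{PC}^{+}$ and $\operatorname{PC}^{\pm}=\operatorname{PC}^{+}\cup\operatorname{PC}^{-}$ (a subgroup). *)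

(* Defs.v *)
From Stdlib Require Import Reals Lra List.
Open Scope R_scope.

Definition X : Type := {x : R | 0 <= x < 1}.
Definition v (x : X) : R := proj1_sig x.

Definition cofinitely (P : X -> Prop) : Prop :=
  exists l : list X, forall x : X, ~ In x l -> P x.

Definition bij (f : X -> X) : Prop :=
  exists g : X -> X, (forall x, g (f x) = x) /\ (forall y, f (g y) = y).

Definition cont_at (f : X -> X) (x : X) : Prop :=
  forall eps, 0 < eps -> exists delta, 0 < delta /\
    forall y : X, Rabs (v y - v x) < delta -> Rabs (v (f y) - v (f x)) < eps.

Definition PCbow_hat (f : X -> X) : Prop :=
  bij f /\ cofinitely (fun x => cont_at f x).

Definition PCplus_hat (h : X -> X) : Prop :=
  PCbow_hat h /\
  exists (n : nat) (s : nat -> R),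
    s 0%nat = 0 /\ s n = 1 /\
    (forall i, (i < n)%nat -> s i < s (S i)) /\
    (forall i, (i < n)%nat ->
       (forall x : X, s i < v x < s (S i) -> cont_at h x) /\
       (forall x y : X, s i < v x -> v x < v y -> v y < s (S i) ->
          v (h x) < v (h y))).

(* equality in the quotient by finitely supported permutations:
   agreement outside a finite set *)
Definition eqfin (f g : X -> X) : Prop := cofinitely (fun x => f x = g x).

Definition in_PCplus (f : X -> X) : Prop :=
  exists k, PCplus_hat k /\ eqfin f k.

(* the class of f lies in PC^- = R . PC^+ , where R is the class of any
   bijection of X agreeing with x |-> 1 - x outside a finite set *)
Definition in_PCminus (f : X -> X) : Prop :=
  exists r k : X -> X,
    bij r /\ cofinitely (fun x => v (r x) = 1 - v x) /\
    PCplus_hat k /\ eqfin f (fun x => r (k x)).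

Definition in_PCpm (f : X -> X) : Prop := in_PCplus f \/ in_PCminus f.

(* the class [g] (g in \widehat{PC^bowtie}) normalizes PC^+ :
   [g] PC^+ [g]^{-1} = PC^+, i.e. both g PC^+ g^{-1} and g^{-1} PC^+ g
   are contained in PC^+ *)
Definition normalizes_PCplus (g : X -> X) : Prop :=
  forall ginv : X -> X,
    (forall x, ginv (g x) = x) -> (forall y, g (ginv y) = y) ->
    (forall h, PCplus_hat h -> in_PCplus (fun x => g (h (ginv x)))) /\
    (forall h, PCplus_hat h -> in_PCplus (fun x => ginv (h (g x)))).

(* Main.v *)
Require Import Defs.
From Stdlib Require Import Reals Lra Lia List ProofIrrelevance Classical Bool.
Open Scope R_scope.

Ltac rabs_h := repeat match goal with
  | H : Rabs _ < _ |- _ => apply Rabs_def2 in H; destruct H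
  end.
Ltac rabs_g := match goal with |- Rabs _ < _ => apply Rabs_def1 end.

Lemma Xeq : forall x y : X, v x = v y -> x = y.
Proof.
  intros [a ha] [b hb]; simpl; intros ->. f_equal. apply proof_irrelevance.
Qed.

Lemma vX : forall x : X, 0 <= v x < 1.
Proof. intros [a ha]; exact ha. Qed.

Definition x0 : X := exist _ 0 (conj (Rle_refl 0) Rlt_0_1).

Definition toX (r : R) : X :=
  match Rle_dec 0 r, Rlt_dec r 1 with
  | left h1, left h2 => exist _ r (conj h1 h2)
  | _, _ => x0
  end.

Lemma toX_v : forall r, 0 <= r < 1 -> v (toX r) = r.
Proof.
  intros r [h1 h2]; unfold toX.
  destruct (Rle_dec 0 r); [|contradiction]. destruct (Rlt_dec r 1); [|contradiction].
  reflexivity.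
Qed.

Lemma toX_vx : forall x : X, toX (v x) = x.
Proof. intros x; apply Xeq; apply toX_v, vX. Qed.

Lemma cof_and : forall P Q : X -> Prop, cofinitely P -> cofinitely Q ->
  cofinitely (fun x => P x /\ Q x).
Proof.
  intros P Q [l1 h1] [l2 h2]; exists (l1 ++ l2); intros x hx.
  split; [apply h1|apply h2]; intro; apply hx; apply in_or_app; auto.
Qed.

Lemma cof_mono : forall P Q : X -> Prop, cofinitely P -> (forall x, P x -> Q x) ->
  cofinitely Q.
Proof. intros P Q [l h] H; exists l; auto. Qed.

Lemma cof_pre : forall (f finv : X -> X) (P : X -> Prop),
  (forall x, finv (f x) = x) -> cofinitely P -> cofinitely (fun x => P (f x)).
Proof.
  intros f finv P hf [l h]; exists (map finv l); intros x hx; apply h.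
  intro hin; apply hx; rewrite <- (hf x); apply in_map; auto.
Qed.

Lemma avoid_R : forall (L : list R) a b, a < b -> exists r, a < r < b /\ ~ In r L.
Proof.
  induction L as [|l L IH]; intros a b hab.
  - exists ((a+b)/2); split; [lra| simpl; tauto].
  - destruct (Rlt_dec a l) as [h1|h1]; [destruct (Rlt_dec l b) as [h2|h2]|].
    + destruct (IH a l h1) as [r [hr hn]]. exists r; split; [lra|].
      simpl; intros [e|e]; [lra|tauto].
    + destruct (IH a b hab) as [r [hr hn]]. exists r; split; [lra|].
      simpl; intros [e|e]; [lra|tauto].
    + destruct (IH a b hab) as [r [hr hn]]. exists r; split; [lra|].
      simpl; intros [e|e]; [lra|tauto].
Qed.

Lemma avoid_X : forall (L : list X) a b, 0 <= a -> a < b -> b <= 1 ->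
  exists x : X, a < v x < b /\ ~ In x L.
Proof.
  intros L a b ha hab hb.
  destruct (avoid_R (map v L) a b hab) as [r [hr hn]].
  exists (toX r). rewrite toX_v by lra. split; auto.
  intro hin; apply hn. rewrite <- (toX_v r) by lra. apply in_map; auto.
Qed.

Lemma dist_avoid : forall (L : list X) x, ~ In x L ->
  exists d, 0 < d /\ forall y, In y L -> d <= Rabs (v y - v x).
Proof.
  induction L as [|l L IH]; intros x hx.
  - exists 1; split; [lra| simpl; tauto].
  - assert (hl : l <> x) by (intro e; apply hx; left; auto).
    assert (hx' : ~ In x L) by (intro; apply hx; right; auto).
    destruct (IH x hx') as [d [hd H]].
    assert (hv : v l <> v x) by (intro e; apply hl, Xeq, e).
    exists (Rmin d (Rabs (v l - v x))). split.
    + apply Rmin_pos; auto. apply Rabs_pos_lt; lra.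
    + intros y [<-|hy]; [apply Rmin_r|].
      eapply Rle_trans; [apply Rmin_l| auto].
Qed.

Lemma find_piece : forall n (s : nat -> R) t, s 0%nat <= t < s n ->
  exists i, (i < n)%nat /\ s i <= t < s (S i).
Proof.
  induction n; intros s t [h1 h2]; [lra|].
  destruct (Rlt_dec t (s n)) as [h|h].
  - destruct (IHn s t) as [i [hi hh]]; [lra|]. exists i; split; [lia|auto].
  - exists n; split; [lia|lra].
Qed.

Lemma strict_mono : forall n (s : nat -> R), (forall i, (i < n)%nat -> s i < s (S i)) ->
  forall i j, (i < j)%nat -> (j <= n)%nat -> s i < s j.
Proof.
  intros n s hs i j hij; induction hij; intros hn.
  - apply hs; lia.
  - apply Rlt_trans with (s m); [apply IHhij; lia| apply hs; lia].
Qed.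
Definition Partition (L : list R) :=
  exists n (s : nat -> R), s 0%nat = 0 /\ s n = 1 /\
    (forall i, (i < n)%nat -> s i < s (S i)) /\
    (forall t, In t L -> exists i, (i <= n)%nat /\ s i = t).

Lemma part : forall L, (forall t, In t L -> 0 <= t < 1) -> Partition L.
Proof.
  induction L as [|t L IH]; intros HL.
  - exists 1%nat, (fun i => match i with O => 0 | _ => 1 end).
    repeat split; try reflexivity.
    + intros i hi; destruct i; [lra|lia].
    + simpl; tauto.
  - destruct IH as [n [s [h0 [hn [hs hin]]]]]; [intros; apply HL; right; auto|].
    assert (ht : 0 <= t < 1) by (apply HL; left; auto).
    destruct (find_piece n s t) as [i [hi [hi1 hi2]]]; [lra|].
    destruct (Req_dec (s i) t) as [e|ne].
    + exists n, s; repeat split; auto.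
      intros u [<-|hu]; [exists i; split; [lia|auto]|auto].
    + assert (hlt : s i < t) by (destruct hi1; [auto|contradiction]).
      set (s' := fun j => if Nat.leb j i then s j else if Nat.eqb j (S i) then t else s (pred j)).
      exists (S n), s'. repeat split.
      * unfold s'; simpl; auto.
      * unfold s'. destruct (Nat.leb_spec (S n) i); [lia|].
        destruct (Nat.eqb_spec (S n) (S i)); [lia|]. simpl; auto.
      * intros j hj; unfold s'.
        destruct (Nat.leb_spec j i); destruct (Nat.leb_spec (S j) i);
        destruct (Nat.eqb_spec j (S i)); destruct (Nat.eqb_spec (S j) (S i)); try lia.
        -- apply hs; lia.
        -- assert (j = i) by lia; subst; lra.
        -- subst. simpl. lra.
        -- destruct j; [lia|]. simpl. apply hs; lia.
      * intros u [<-|hu].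
        -- exists (S i); split; [lia|]. unfold s'.
           destruct (Nat.leb_spec (S i) i); [lia|]. rewrite Nat.eqb_refl; auto.
        -- destruct (hin u hu) as [j [hj <-]].
           destruct (Nat.leb_spec j i).
           ++ exists j; split; [lia|]. unfold s'. destruct (Nat.leb_spec j i); [auto|lia].
           ++ exists (S j); split; [lia|]. unfold s'.
              destruct (Nat.leb_spec (S j) i); [lia|].
              destruct (Nat.eqb_spec (S j) (S i)); [lia|]. reflexivity.
Qed.
Definition ordb (b : bool) (a c : R) : Prop := if b then a < c else c < a.

Definition locmono (b : bool) (f : X -> X) (x : X) : Prop :=
  exists d, 0 < d /\ forall y z : X, Rabs (v y - v x) < d -> Rabs (v z - v x) < d ->
    v y < v z -> ordb b (v (f y)) (v (f z)).

Definition Good (b : bool) (f : X -> X) : Prop :=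
  cofinitely (fun x => cont_at f x /\ locmono b f x).

Lemma LG : forall (f : X -> X) a b, (forall x : X, a < v x < b -> locmono true f x) ->
  forall x y : X, a < v x -> v x < v y -> v y < b -> v (f x) < v (f y).
Proof.
  intros f a b Hloc x y hax hxy hyb.
  set (E := fun t => v x <= t <= v y /\
            forall z : X, v x < v z <= t -> v (f x) < v (f z)).
  assert (hb : bound E) by (exists (v y); intros t [ht _]; lra).
  assert (he : exists t, E t) by (exists (v x); split; [lra| intros z hz; lra]).
  destruct (completeness E hb he) as [c [hub hlub]].
  assert (hc1 : v x <= c) by (apply hub; split; [lra|intros z hz; lra]).
  assert (hc2 : c <= v y) by (apply hlub; intros t [ht _]; lra).
  pose proof (vX x) as hvx. pose proof (vX y) as hvy.
  assert (hpc : v (toX c) = c) by (apply toX_v; lra).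
  destruct (Hloc (toX c)) as [d [hd Hd]]; [rewrite hpc; lra|].
  rewrite hpc in Hd. simpl in Hd.
  assert (Ht : exists t, E t /\ c - d < t).
  { apply NNPP; intro hn. assert (c <= c - d); [|lra].
    apply hlub; intros t Et. destruct (Rle_dec t (c - d)) as [h|h]; [auto|].
    exfalso; apply hn; exists t; split; auto; lra. }
  destruct Ht as [t [[[ht1 ht2] Et] htc]].
  assert (htc2 : t <= c) by (apply hub; split; auto).
  set (t' := Rmin (c + d/2) (v y)).
  assert (Et' : E t').
  { unfold t'; split; [unfold Rmin; destruct Rle_dec; lra|].
    intros z [hz1 hz2].
    destruct (Rle_dec (v z) t) as [h|h]; [apply Et; lra|].
    assert (hz3 : v z <= c + d/2) by (eapply Rle_trans; [exact hz2| apply Rmin_l]).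
    destruct (Req_dec t (v x)) as [e|ne].
    - apply Hd; [rabs_g; lra|rabs_g; lra|lra].
    - assert (hw : v (toX t) = t) by (apply toX_v; lra).
      apply Rlt_trans with (v (f (toX t))).
      + apply Et; rewrite hw; lra.
      + apply Hd; rewrite ?hw; [rabs_g; lra|rabs_g; lra|lra]. }
  assert (ht'c : t' <= c) by (apply hub; auto).
  destruct Et' as [_ Et'].
  apply Et'. split; [lra|]. unfold t' in *; unfold Rmin in *; destruct Rle_dec; lra.
Qed.
Lemma mono_le : forall n (s : nat -> R), (forall i, (i < n)%nat -> s i < s (S i)) ->
  forall i j, (i <= j)%nat -> (j <= n)%nat -> s i <= s j.
Proof.
  intros n s hs i j hij hjn. destruct (Nat.eq_dec i j) as [->|ne]; [lra|].
  left; apply (strict_mono n); auto; lia.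
Qed.

Lemma plus_loc : forall k, PCplus_hat k -> Good true k.
Proof.
  intros k [[hbij [lc hc]] [n [s [h0 [hn [hs hp]]]]]].
  exists (lc ++ map (fun i => toX (s i)) (seq 0 (S n))).
  intros x hx. split; [apply hc; intro; apply hx; apply in_or_app; auto|].
  pose proof (vX x) as hvx.
  destruct (find_piece n s (v x)) as [i [hi [hi1 hi2]]]; [lra|].
  assert (hne : s i <> v x).
  { intro e. apply hx; apply in_or_app; right.
    replace x with (toX (s i)) by (apply Xeq; rewrite toX_v; lra).
    apply (in_map (fun i => toX (s i))). apply in_seq; lia. }
  assert (hlt : s i < v x) by (destruct hi1; [auto|contradiction]).
  exists (Rmin (v x - s i) (s (S i) - v x)). split.
  { apply Rmin_pos; lra. }
  intros y z hy hz hyz. simpl.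
  pose proof (Rmin_l (v x - s i) (s (S i) - v x)).
  pose proof (Rmin_r (v x - s i) (s (S i) - v x)).
  rabs_h. destruct (hp i hi) as [_ hinc]. apply hinc; lra.
Qed.

Lemma loc_plus : forall f, bij f -> Good true f -> PCplus_hat f.
Proof.
  intros f hb hg. destruct hg as [F hF].
  destruct (part (map v F)) as [n [s [h0 [hn [hs hin]]]]].
  { intros t ht. apply in_map_iff in ht. destruct ht as [x [<- _]]. apply vX. }
  assert (Hnot : forall i x, (i < n)%nat -> s i < v x < s (S i) -> ~ In x F).
  { intros i x hi hx hxF. destruct (hin (v x)) as [j [hj e]]; [apply in_map; auto|].
    destruct (Compare_dec.le_lt_dec j i).
    - pose proof (mono_le n s hs j i ltac:(lia) ltac:(lia)); lra.
    - pose proof (mono_le n s hs (S i) j ltac:(lia) ltac:(lia)); lra. }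
  split.
  - split; auto. exists F; intros x hx; apply hF; auto.
  - exists n, s. repeat split; auto.
    + intros x hx. apply hF. eapply Hnot; eauto.
    + intros x y h1 h2 h3. eapply (LG f (s i) (s (S i))); eauto.
      intros z hz. apply hF. eapply Hnot; eauto.
Qed.
Definition clamp (a b t : R) := Rmax a (Rmin b t).

Lemma clamp_in : forall a b t, a <= b -> a <= clamp a b t <= b.
Proof. intros; unfold clamp, Rmax, Rmin; repeat destruct Rle_dec; lra. Qed.

Lemma clamp_id : forall a b t, a <= t <= b -> clamp a b t = t.
Proof. intros; unfold clamp, Rmax, Rmin; repeat destruct Rle_dec; lra. Qed.

Lemma clamp_lip : forall a b t t' d, a <= b -> Rabs (t - t') < d ->
  Rabs (clamp a b t - clamp a b t') < d.
Proof.
  intros a b t t' d hab h. rabs_h. rabs_g; unfold clamp, Rmax, Rmin; repeat destruct Rle_dec; lra.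
Qed.

Lemma IVTX : forall (g : X -> X) (lo hi : X), v lo < v hi ->
  (forall x, v lo <= v x <= v hi -> cont_at g x) ->
  forall w, (v (g lo) < w < v (g hi) \/ v (g hi) < w < v (g lo)) ->
  exists x, v lo <= v x <= v hi /\ v (g x) = w.
Proof.
  intros g lo hi hlh hc w hw.
  pose proof (vX lo). pose proof (vX hi).
  set (phi := fun t => v (g (toX (clamp (v lo) (v hi) t)))).
  assert (hcl : forall t, v (toX (clamp (v lo) (v hi) t)) = clamp (v lo) (v hi) t).
  { intro t; apply toX_v. pose proof (clamp_in (v lo) (v hi) t); lra. }
  assert (hcont : continuity phi).
  { intros t0 eps heps.
    destruct (hc (toX (clamp (v lo) (v hi) t0)) ltac:(rewrite hcl; apply clamp_in; lra) eps heps)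
      as [d [hd Hd]].
    exists d; split; [lra|]. intros t [_ ht]. simpl in *. unfold R_dist in *.
    unfold phi. apply Hd. rewrite !hcl. apply clamp_lip; lra. }
  assert (hlo : phi (v lo) = v (g lo)).
  { unfold phi; rewrite clamp_id by lra; rewrite toX_vx; auto. }
  assert (hhi : phi (v hi) = v (g hi)).
  { unfold phi; rewrite clamp_id by lra; rewrite toX_vx; auto. }
  destruct hw as [hw|hw].
  - destruct (IVT (fun t => phi t - w) (v lo) (v hi)) as [z [hz e]]; auto.
    + apply continuity_minus; auto. apply continuity_const; intros a b; auto.
    + simpl; lra.
    + simpl; lra.
    + exists (toX (clamp (v lo) (v hi) z)). split; [rewrite hcl, clamp_id by lra; lra|].
      simpl in e. unfold phi in e. lra.
  - destruct (IVT (fun t => w - phi t) (v lo) (v hi)) as [z [hz e]]; auto.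
    + apply continuity_minus; auto. apply continuity_const; intros a b; auto.
    + simpl; lra.
    + simpl; lra.
    + exists (toX (clamp (v lo) (v hi) z)). split; [rewrite hcl, clamp_id by lra; lra|].
      simpl in e. unfold phi in e. lra.
Qed.
Lemma between : forall (g ginv : X -> X) (lo hi : X), (forall x, ginv (g x) = x) ->
  (forall x, v lo <= v x <= v hi -> cont_at g x) ->
  forall x y z, v lo <= v x -> v x < v y -> v y < v z -> v z <= v hi ->
  (v (g x) < v (g y) < v (g z)) \/ (v (g z) < v (g y) < v (g x)).
Proof.
  intros g ginv lo hi hinv hc x y z h1 h2 h3 h4.
  assert (inj : forall a b, v (g a) = v (g b) -> v a = v b).
  { intros a b e. apply Xeq in e. rewrite <- (hinv a), <- (hinv b), e; auto. }
  assert (nx : v (g x) <> v (g y)) by (intro e; apply inj in e; lra).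
  assert (nz : v (g z) <> v (g y)) by (intro e; apply inj in e; lra).
  assert (Peak : ~ (v (g x) < v (g y) /\ v (g z) < v (g y))).
  { intros [ha hb].
    set (w := (Rmax (v (g x)) (v (g z)) + v (g y)) / 2).
    assert (hw1 : v (g x) < w < v (g y)) by (unfold w, Rmax; destruct Rle_dec; lra).
    assert (hw2 : v (g z) < w < v (g y)) by (unfold w, Rmax; destruct Rle_dec; lra).
    destruct (IVTX g x y h2 ltac:(intros; apply hc; lra) w ltac:(lra)) as [x1 [hx1 e1]].
    destruct (IVTX g y z h3 ltac:(intros; apply hc; lra) w ltac:(lra)) as [x2 [hx2 e2]].
    assert (v x1 = v x2) by (apply inj; lra).
    assert (v x1 = v y) by lra. rewrite <- (toX_vx x1), H0, toX_vx in e1. lra. }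
  assert (Valley : ~ (v (g y) < v (g x) /\ v (g y) < v (g z))).
  { intros [ha hb].
    set (w := (Rmin (v (g x)) (v (g z)) + v (g y)) / 2).
    assert (hw1 : v (g y) < w < v (g x)) by (unfold w, Rmin; destruct Rle_dec; lra).
    assert (hw2 : v (g y) < w < v (g z)) by (unfold w, Rmin; destruct Rle_dec; lra).
    destruct (IVTX g x y h2 ltac:(intros; apply hc; lra) w ltac:(lra)) as [x1 [hx1 e1]].
    destruct (IVTX g y z h3 ltac:(intros; apply hc; lra) w ltac:(lra)) as [x2 [hx2 e2]].
    assert (v x1 = v x2) by (apply inj; lra).
    assert (v x1 = v y) by lra. rewrite <- (toX_vx x1), H0, toX_vx in e1. lra. }
  destruct (Rtotal_order (v (g x)) (v (g y))) as [a|[a|a]]; [|contradiction|];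
  destruct (Rtotal_order (v (g z)) (v (g y))) as [b|[b|b]]; try contradiction;
  try tauto; lra.
Qed.

Lemma mono_between : forall (J : X -> Prop) (phi : X -> R),
  (forall x y z, J x -> J y -> J z -> v x < v y -> v y < v z ->
     (phi x < phi y < phi z) \/ (phi z < phi y < phi x)) ->
  forall a0 b0, J a0 -> J b0 -> v a0 < v b0 -> phi a0 < phi b0 ->
  forall u w, J u -> J w -> v u < v w -> phi u < phi w.
Proof.
  intros J phi B a0 b0 ha hb hab hp.
  assert (Prop1 : forall x y, J x -> J y -> v x < v y -> phi x < phi y ->
     forall z, J z -> (v y < v z -> phi y < phi z) /\ (v z < v x -> phi z < phi x)
       /\ (v x < v z < v y -> phi x < phi z < phi y)).
  { intros x y hx hy hxy hpxy z hz. split; [|split]; intros.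
    - destruct (B x y z) as [h|h]; auto; lra.
    - destruct (B z x y) as [h|h]; auto; lra.
    - destruct (B x z y) as [h|h]; auto; lra. }
  assert (Ha : forall z, J z -> (v z < v a0 -> phi z < phi a0) /\ (v a0 < v z -> phi a0 < phi z)).
  { intros z hz. destruct (Prop1 a0 b0 ha hb hab hp z hz) as [p1 [p2 p3]]. split; auto.
    intro h. destruct (Rtotal_order (v z) (v b0)) as [c|[c|c]].
    - apply p3; lra.
    - replace z with b0 by (apply Xeq; auto). auto.
    - specialize (p1 c); lra. }
  intros u w hu hw huw.
  destruct (Rtotal_order (v u) (v a0)) as [c1|[c1|c1]].
  - destruct (Rtotal_order (v w) (v a0)) as [c2|[c2|c2]].
    + assert (phi w < phi a0) by (apply Ha; auto).
      destruct (Prop1 w a0 hw ha c2 H u hu) as [_ [p _]]. apply p; auto.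
    + replace w with a0 by (apply Xeq; auto). apply Ha; auto.
    + apply Rlt_trans with (phi a0); apply Ha; auto.
  - replace u with a0 by (apply Xeq; auto). apply Ha; auto; lra.
  - assert (phi a0 < phi u) by (apply Ha; auto).
    destruct (Prop1 a0 u ha hu c1 H w hw) as [p _]. apply p; auto.
Qed.
Lemma loc_of_cont : forall (g ginv : X -> X) (p : X) d0, (forall x, ginv (g x) = x) ->
  0 < d0 -> (forall x, Rabs (v x - v p) < d0 -> cont_at g x) ->
  locmono true g p \/ locmono false g p.
Proof.
  intros g ginv p d0 hinv hd0 hc.
  pose proof (vX p) as hp.
  set (d1 := Rmin (d0/2) ((1 - v p)/2)).
  assert (hd1 : 0 < d1 /\ d1 <= d0/2 /\ d1 <= (1 - v p)/2).
  { unfold d1, Rmin; destruct Rle_dec; lra. }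
  set (lo := toX (Rmax 0 (v p - d0/2))). set (hi := toX (v p + d1)).
  assert (hlo : v lo = Rmax 0 (v p - d0/2)).
  { unfold lo; apply toX_v; unfold Rmax; destruct Rle_dec; lra. }
  assert (hhi : v hi = v p + d1) by (unfold hi; apply toX_v; lra).
  assert (hlo2 : v lo <= v p) by (rewrite hlo; unfold Rmax; destruct Rle_dec; lra).
  assert (hlo3 : v p - d0/2 <= v lo) by (rewrite hlo; apply Rmax_r).
  set (J := fun x => v lo <= v x <= v hi).
  assert (hcJ : forall x, v lo <= v x <= v hi -> cont_at g x).
  { intros x hx; apply hc; rabs_g; lra. }
  assert (inJ : forall y, Rabs (v y - v p) < d1 -> J y).
  { intros y hy; rabs_h; pose proof (vX y); unfold J; split; [|lra].
    rewrite hlo; unfold Rmax; destruct Rle_dec; lra. }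
  assert (inj : forall a b, v (g a) = v (g b) -> v a = v b).
  { intros a b e. apply Xeq in e. rewrite <- (hinv a), <- (hinv b), e; auto. }
  assert (hlh : v lo < v hi) by lra.
  destruct (Rtotal_order (v (g lo)) (v (g hi))) as [c|[c|c]].
  - left. exists d1; split; [lra|]. intros y z hy hz hyz. simpl.
    apply (mono_between J (fun x => v (g x))) with lo hi; auto; unfold J; try lra.
    intros x y0 z0 hx hy0 hz0 h1 h2. eapply (between g ginv lo hi); eauto; unfold J in *; lra.
  - apply inj in c; lra.
  - right. exists d1; split; [lra|]. intros y z hy hz hyz. simpl.
    cut (- v (g y) < - v (g z)); [lra|].
    apply (mono_between J (fun x => - v (g x))) with lo hi; auto; unfold J; try lra.
    intros x y0 z0 hx hy0 hz0 h1 h2.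
    destruct (between g ginv lo hi hinv hcJ x y0 z0); unfold J in *; try lra.
Qed.

Lemma avoid_ball : forall (F : list X) x, ~ In x F ->
  exists d, 0 < d /\ forall y, Rabs (v y - v x) < d -> ~ In y F.
Proof.
  intros F x hx. destruct (dist_avoid F x hx) as [d [hd H]].
  exists d; split; auto. intros y hy hin. specialize (H y hin). lra.
Qed.

Lemma bow_loc : forall g, PCbow_hat g ->
  cofinitely (fun x => cont_at g x /\ (locmono true g x \/ locmono false g x)).
Proof.
  intros g [[ginv [h1 h2]] [F hF]]. exists F. intros x hx. split; auto.
  destruct (avoid_ball F x hx) as [d [hd H]].
  apply (loc_of_cont g ginv x d h1 hd). intros y hy; apply hF, H, hy.
Qed.
Lemma inv_point : forall (b : bool) (g ginv : X -> X) (F : list X),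
  (forall x, ginv (g x) = x) -> (forall y, g (ginv y) = y) ->
  (forall x, ~ In x F -> cont_at g x /\ locmono b g x) ->
  forall x, ~ In x F -> 0 < v x -> cont_at ginv (g x) /\ locmono b ginv (g x).
Proof.
  intros b g ginv F h1 h2 hF x hx hx0.
  pose proof (vX x) as hvx.
  destruct (avoid_ball F x hx) as [d0 [hd0 Hd0]].
  destruct (hF x hx) as [_ [dl [hdl Hdl]]].
  assert (Hc : cont_at ginv (g x)).
  { intros eps heps.
    set (e' := Rmin (Rmin eps d0) (Rmin dl (Rmin (v x) (1 - v x))) / 2).
    assert (he' : 0 < e' /\ e' < eps /\ e' < d0 /\ e' < dl /\ e' < v x /\ e' < 1 - v x).
    { unfold e', Rmin; repeat destruct Rle_dec; lra. }
    set (a := toX (v x - e')). set (c := toX (v x + e')).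
    assert (ha : v a = v x - e') by (apply toX_v; lra).
    assert (hc : v c = v x + e') by (apply toX_v; lra).
    assert (oa : ordb b (v (g a)) (v (g x))) by (apply Hdl; rewrite ?ha; try (rabs_g; lra); lra).
    assert (oc : ordb b (v (g x)) (v (g c))) by (apply Hdl; rewrite ?hc; try (rabs_g; lra); lra).
    set (eta := Rmin (Rabs (v (g a) - v (g x))) (Rabs (v (g c) - v (g x)))).
    assert (heta : 0 < eta).
    { unfold eta; apply Rmin_pos; apply Rabs_pos_lt; destruct b; simpl in *; lra. }
    exists eta; split; auto. intros y' hy'.
    assert (hcont : forall z, v a <= v z <= v c -> cont_at g z).
    { intros z hz. destruct (hF z); auto. apply Hd0. rabs_g; lra. }
    assert (Hbt : v (g a) < v y' < v (g c) \/ v (g c) < v y' < v (g a)).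
    { pose proof (Rmin_l (Rabs (v (g a) - v (g x))) (Rabs (v (g c) - v (g x)))).
      pose proof (Rmin_r (Rabs (v (g a) - v (g x))) (Rabs (v (g c) - v (g x)))).
      fold eta in H, H0. rabs_h.
      destruct b; simpl in *.
      - rewrite Rabs_left in H by lra; rewrite Rabs_right in H0 by lra. left; lra.
      - rewrite Rabs_right in H by lra; rewrite Rabs_left in H0 by lra. right; lra. }
    destruct (IVTX g a c ltac:(lra) hcont (v y') Hbt) as [z [hz ez]].
    apply Xeq in ez. rewrite <- ez, !h1. rabs_g; lra. }
  split; auto.
  destruct (Hc dl hdl) as [eta [heta Heta]]. rewrite h1 in Heta.
  exists eta; split; auto. intros y1 y2 hy1 hy2 hy12.
  pose proof (Heta y1 hy1) as k1. pose proof (Heta y2 hy2) as k2.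
  destruct (Rtotal_order (v (ginv y1)) (v (ginv y2))) as [c|[c|c]].
  - pose proof (Hdl _ _ k1 k2 c) as o. rewrite !h2 in o. destruct b; simpl in *; lra.
  - apply Xeq in c. apply (f_equal g) in c. rewrite !h2 in c. subst; lra.
  - pose proof (Hdl _ _ k2 k1 c) as o. rewrite !h2 in o. destruct b; simpl in *; lra.
Qed.

Lemma inv_good : forall b (g ginv : X -> X),
  (forall x, ginv (g x) = x) -> (forall y, g (ginv y) = y) -> Good b g -> Good b ginv.
Proof.
  intros b g ginv h1 h2 [F hF].
  assert (C : cofinitely (fun x => ~ In x F /\ 0 < v x)).
  { exists (x0 :: F). intros x hx. split; [intro; apply hx; right; auto|].
    pose proof (vX x). destruct (Req_dec (v x) 0) as [e|e]; [|lra].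
    exfalso; apply hx; left; apply Xeq; simpl; auto. }
  apply (cof_pre ginv g) in C; auto.
  eapply cof_mono; [exact C|]. intros y [hy hy0]. simpl in hy, hy0.
  rewrite <- (h2 y). apply (inv_point b g ginv F); auto.
Qed.
Lemma comp_point : forall b1 b2 (f1 f2 : X -> X) p,
  cont_at f1 p -> locmono b1 f1 p -> cont_at f2 (f1 p) -> locmono b2 f2 (f1 p) ->
  cont_at (fun x => f2 (f1 x)) p /\ locmono (eqb b1 b2) (fun x => f2 (f1 x)) p.
Proof.
  intros b1 b2 f1 f2 p c1 [d1 [hd1 H1]] c2 [d2 [hd2 H2]]. split.
  - intros eps heps. destruct (c2 eps heps) as [e2 [he2 E2]].
    destruct (c1 e2 he2) as [e1 [he1 E1]]. exists e1; split; auto.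
  - destruct (c1 d2 hd2) as [e1 [he1 E1]].
    exists (Rmin d1 e1). split; [apply Rmin_pos; auto|].
    intros y z hy hz hyz.
    assert (hy1 : Rabs (v y - v p) < d1) by (eapply Rlt_le_trans; [exact hy| apply Rmin_l]).
    assert (hz1 : Rabs (v z - v p) < d1) by (eapply Rlt_le_trans; [exact hz| apply Rmin_l]).
    assert (hy2 : Rabs (v y - v p) < e1) by (eapply Rlt_le_trans; [exact hy| apply Rmin_r]).
    assert (hz2 : Rabs (v z - v p) < e1) by (eapply Rlt_le_trans; [exact hz| apply Rmin_r]).
    pose proof (H1 y z hy1 hz1 hyz) as o1.
    pose proof (E1 y hy2) as k1. pose proof (E1 z hz2) as k2.
    destruct b1; simpl in o1.
    + pose proof (H2 _ _ k1 k2 o1) as o2. destruct b2; simpl in *; auto.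
    + pose proof (H2 _ _ k2 k1 o1) as o2. destruct b2; simpl in *; auto.
Qed.

Lemma comp_good : forall b1 b2 (f1 f1inv f2 : X -> X), (forall x, f1inv (f1 x) = x) ->
  Good b1 f1 -> Good b2 f2 -> Good (eqb b1 b2) (fun x => f2 (f1 x)).
Proof.
  intros b1 b2 f1 f1inv f2 hinv g1 g2.
  pose proof (cof_pre f1 f1inv _ hinv g2) as g2'.
  eapply cof_mono; [apply (cof_and _ _ g1 g2')|].
  intros x [[c1 m1] [c2 m2]]. apply comp_point; auto.
Qed.

Lemma modif : forall b bu (k f : X -> X) (u : R -> R),
  (forall a c, a < c -> ordb bu (u a) (u c)) ->
  cofinitely (locmono b k) -> cofinitely (fun z => v (f z) = u (v (k z))) ->
  cofinitely (locmono (eqb b bu) f).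
Proof.
  intros b bu k f u hu [L1 H1] [E HE].
  exists (E ++ L1). intros x hx.
  assert (hxE : ~ In x E) by (intro; apply hx; apply in_or_app; auto).
  assert (hxL : ~ In x L1) by (intro; apply hx; apply in_or_app; auto).
  destruct (H1 x hxL) as [d [hd Hd]].
  destruct (avoid_ball E x hxE) as [d0 [hd0 Hd0]].
  exists (Rmin d d0). split; [apply Rmin_pos; auto|].
  intros y z hy hz hyz.
  assert (hy1 : Rabs (v y - v x) < d) by (eapply Rlt_le_trans; [exact hy| apply Rmin_l]).
  assert (hz1 : Rabs (v z - v x) < d) by (eapply Rlt_le_trans; [exact hz| apply Rmin_l]).
  assert (hy2 : Rabs (v y - v x) < d0) by (eapply Rlt_le_trans; [exact hy| apply Rmin_r]).
  assert (hz2 : Rabs (v z - v x) < d0) by (eapply Rlt_le_trans; [exact hz| apply Rmin_r]).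
  rewrite (HE y (Hd0 y hy2)), (HE z (Hd0 z hz2)).
  pose proof (Hd y z hy1 hz1 hyz) as o.
  destruct b; simpl in o.
  + pose proof (hu _ _ o). destruct bu; simpl in *; auto.
  + pose proof (hu _ _ o). destruct bu; simpl in *; auto.
Qed.
Lemma bij_comp : forall f1 f2 : X -> X, bij f1 -> bij f2 -> bij (fun x => f2 (f1 x)).
Proof.
  intros f1 f2 [g1 [a1 b1]] [g2 [a2 b2]]. exists (fun y => g1 (g2 y)).
  split; intros; [rewrite a2, a1|rewrite b1, b2]; auto.
Qed.

Lemma good_plus_in : forall f, bij f -> Good true f -> in_PCplus f.
Proof.
  intros f hb hg. exists f. split; [apply loc_plus; auto|]. exists nil; auto.
Qed.

Lemma pm_good : forall g, PCbow_hat g -> in_PCpm g -> exists b, Good b g.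
Proof.
  intros g [hb [Fc hc]] [[k [hk he]] | [r [k [hr [hr1 [hk he]]]]]].
  - exists true.
    assert (M : cofinitely (locmono (eqb true true) g)).
    { apply (modif true true k g (fun a => a)); simpl; auto.
      - eapply cof_mono; [apply plus_loc; eauto|]. intros x [_ m]; auto.
      - eapply cof_mono; [exact he|]. intros x e; rewrite e; auto. }
    eapply cof_mono; [apply (cof_and _ _ (ex_intro _ Fc hc) M)|]. simpl; auto.
  - exists false.
    destruct hk as [[[kinv [k1 k2]] hkc] hkp] eqn:Ehk.
    assert (M : cofinitely (locmono (eqb true false) g)).
    { apply (modif true false k g (fun a => 1 - a)); simpl; auto.
      - intros; lra.
      - eapply cof_mono; [apply plus_loc; eauto|]. intros x [_ m]; auto.
      - pose proof (cof_pre k kinv _ k1 hr1) as h2.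
        eapply cof_mono; [apply (cof_and _ _ he h2)|]. simpl. intros x [e1 e2].
        rewrite e1; auto. }
    eapply cof_mono; [apply (cof_and _ _ (ex_intro _ Fc hc) M)|]. simpl; auto.
Qed.

Lemma easy_dir : forall g, PCbow_hat g -> in_PCpm g -> normalizes_PCplus g.
Proof.
  intros g hg hpm. destruct (pm_good g hg hpm) as [b Gb].
  intros ginv h1 h2.
  assert (Gi : Good b ginv) by (apply (inv_good b g ginv); auto).
  assert (bg : bij g) by (exists ginv; auto).
  assert (bgi : bij ginv) by (exists g; auto).
  split; intros h hh; pose proof (plus_loc h hh) as Gh;
    destruct hh as [[bh _] _]; apply good_plus_in;
    try (apply bij_comp; [apply bij_comp|]; auto; fail);
    destruct bh as [hinv [i1 i2]].
  - pose proof (comp_good b true ginv g h h2 Gi Gh) as G1.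
    pose proof (comp_good _ b (fun x => h (ginv x)) (fun y => g (hinv y)) g
      ltac:(intros; simpl; rewrite i1, h2; auto) G1 Gb) as G2.
    destruct b; exact G2.
  - pose proof (comp_good b true g ginv h h1 Gb Gh) as G1.
    pose proof (comp_good _ b (fun x => h (g x)) (fun y => ginv (hinv y)) ginv
      ltac:(intros; simpl; rewrite i1, h1; auto) G1 Gi) as G2.
    destruct b; exact G2.
Qed.
Definition inI (a e r : R) : bool :=
  if Rle_dec a r then if Rlt_dec r (a + e) then true else false else false.

Lemma inI_true : forall a e r, inI a e r = true <-> a <= r < a + e.
Proof.
  intros a e r; unfold inI; destruct (Rle_dec a r); destruct (Rlt_dec r (a+e)); split; intro; try lra; try discriminate; auto.
Qed.

Lemma inI_false : forall a e r, inI a e r = false <-> ~ (a <= r < a + e).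
Proof.
  intros a e r; unfold inI; destruct (Rle_dec a r); destruct (Rlt_dec r (a+e)); split; intro; try lra; try discriminate; auto;
  exfalso; apply H; lra.
Qed.

Definition Hs (a1 a2 e r : R) : R :=
  if inI a1 e r then r + (a2 - a1) else if inI a2 e r then r - (a2 - a1) else r.

Definition swp (a1 a2 e : R) (x : X) : X := toX (Hs a1 a2 e (v x)).

Section Swap.
Variables a1 a2 e : R.
Hypothesis he : 0 < e.
Hypothesis ha1 : 0 < a1.
Hypothesis ha2 : 0 < a2.
Hypothesis ha1e : a1 + e < 1.
Hypothesis ha2e : a2 + e < 1.
Hypothesis hdisj : a1 + e <= a2 \/ a2 + e <= a1.

Ltac inI_cases r :=
  let h := fresh "hI" in
  destruct (inI a1 e r) eqn:h; [apply inI_true in h|apply inI_false in h];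
  let h' := fresh "hI" in
  destruct (inI a2 e r) eqn:h'; [apply inI_true in h'|apply inI_false in h'].

Lemma Hs_range : forall r, 0 <= r < 1 -> 0 <= Hs a1 a2 e r < 1.
Proof. intros r hr; unfold Hs; inI_cases r; lra. Qed.

Lemma swp_v : forall x, v (swp a1 a2 e x) = Hs a1 a2 e (v x).
Proof. intros x; unfold swp; apply toX_v, Hs_range, vX. Qed.

Lemma Hs_inv : forall r, Hs a1 a2 e (Hs a1 a2 e r) = r.
Proof.
  intros r. unfold Hs at 2. inI_cases r.
  - exfalso; lra.
  - unfold Hs. inI_cases (r + (a2 - a1)); try lra; exfalso; lra.
  - unfold Hs. inI_cases (r - (a2 - a1)); try lra; exfalso; lra.
  - unfold Hs. rewrite (proj2 (inI_false a1 e r) hI), (proj2 (inI_false a2 e r) hI0); auto.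
Qed.

Lemma swp_inv : forall x, swp a1 a2 e (swp a1 a2 e x) = x.
Proof. intros x; apply Xeq; rewrite !swp_v, Hs_inv; auto. Qed.

Lemma same_side : forall q t, q <> t -> exists d, 0 < d /\
  forall s, Rabs (s - t) < d -> (t < q /\ s < q) \/ (q < t /\ q < s).
Proof.
  intros q t hq. exists (Rabs (t - q)). split; [apply Rabs_pos_lt; lra|].
  intros s hs. rabs_h. unfold Rabs in *; destruct Rcase_abs; [left|right]; lra.
Qed.

Lemma inI_same : forall a s t,
  ((t < a /\ s < a) \/ (a < t /\ a < s)) ->
  ((t < a + e /\ s < a + e) \/ (a + e < t /\ a + e < s)) ->
  inI a e s = inI a e t.
Proof.
  intros a s t H1 H2. destruct (inI a e t) eqn:E.
  - apply inI_true in E; apply inI_true; lra.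
  - apply inI_false in E; apply inI_false; lra.
Qed.

Lemma swp_good : Good true (swp a1 a2 e).
Proof.
  exists (toX a1 :: toX (a1 + e) :: toX a2 :: toX (a2 + e) :: nil).
  intros x hx.
  assert (nq : forall q, 0 <= q < 1 -> In (toX q) (toX a1 :: toX (a1 + e) :: toX a2 :: toX (a2 + e) :: nil) -> q <> v x).
  { intros q hq hin e'. apply hx. rewrite <- (toX_vx x), <- e'. auto. }
  assert (n1 : a1 <> v x) by (apply nq; [lra| simpl; auto]).
  assert (n2 : a1 + e <> v x) by (apply nq; [lra| simpl; auto]).
  assert (n3 : a2 <> v x) by (apply nq; [lra| simpl; auto]).
  assert (n4 : a2 + e <> v x) by (apply nq; [lra| simpl; auto]).
  destruct (same_side a1 (v x) n1) as [d1 [hd1 S1]].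
  destruct (same_side (a1 + e) (v x) n2) as [d2 [hd2 S2]].
  destruct (same_side a2 (v x) n3) as [d3 [hd3 S3]].
  destruct (same_side (a2 + e) (v x) n4) as [d4 [hd4 S4]].
  set (d := Rmin (Rmin d1 d2) (Rmin d3 d4)).
  assert (hd : 0 < d /\ d <= d1 /\ d <= d2 /\ d <= d3 /\ d <= d4).
  { unfold d, Rmin; repeat destruct Rle_dec; lra. }
  assert (Sh : forall y, Rabs (v y - v x) < d ->
            v (swp a1 a2 e y) - v y = v (swp a1 a2 e x) - v x).
  { intros y hy. rewrite !swp_v. unfold Hs.
    rewrite (inI_same a1 (v y) (v x)) by (apply S1 || apply S2; lra).
    rewrite (inI_same a2 (v y) (v x)) by (apply S3 || apply S4; lra).
    destruct (inI a1 e (v x)); [lra|]. destruct (inI a2 e (v x)); lra. }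
  split.
  - intros eps heps. exists (Rmin d eps). split; [apply Rmin_pos; lra|].
    intros y hy.
    assert (hy1 : Rabs (v y - v x) < d) by (eapply Rlt_le_trans; [exact hy| apply Rmin_l]).
    assert (hy2 : Rabs (v y - v x) < eps) by (eapply Rlt_le_trans; [exact hy| apply Rmin_r]).
    pose proof (Sh y hy1). replace (v (swp a1 a2 e y) - v (swp a1 a2 e x)) with (v y - v x) by lra.
    auto.
  - exists d; split; [lra|]. intros y z hy hz hyz. simpl.
    pose proof (Sh y hy); pose proof (Sh z hz); lra.
Qed.

Lemma swp_plus : PCplus_hat (swp a1 a2 e).
Proof.
  apply loc_plus; [exists (swp a1 a2 e); split; apply swp_inv| apply swp_good].
Qed.

End Swap.
Definition rho (x : X) : X := if Req_EM_T (v x) 0 then x else toX (1 - v x).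

Lemma rho_v : forall x, v x <> 0 -> v (rho x) = 1 - v x.
Proof.
  intros x hx; unfold rho; destruct Req_EM_T; [contradiction|].
  pose proof (vX x); apply toX_v; lra.
Qed.

Lemma rho_inv : forall x, rho (rho x) = x.
Proof.
  intros x. destruct (Req_EM_T (v x) 0) as [e|ne].
  - unfold rho at 2; destruct Req_EM_T; [|contradiction]. unfold rho; destruct Req_EM_T; auto; contradiction.
  - pose proof (vX x). apply Xeq. rewrite rho_v; rewrite rho_v; auto; lra.
Qed.

Lemma rho_good : Good false rho.
Proof.
  exists (x0 :: nil). intros x hx.
  assert (hx0 : 0 < v x).
  { pose proof (vX x). destruct (Req_dec (v x) 0) as [e|e]; [|lra].
    exfalso; apply hx; left; apply Xeq; simpl; auto. }
  assert (Sh : forall y, Rabs (v y - v x) < v x -> v (rho y) = 1 - v y).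
  { intros y hy; rabs_h; apply rho_v; lra. }
  split.
  - intros eps heps. exists (Rmin (v x) eps). split; [apply Rmin_pos; lra|].
    intros y hy.
    assert (hy1 : Rabs (v y - v x) < v x) by (eapply Rlt_le_trans; [exact hy| apply Rmin_l]).
    assert (hy2 : Rabs (v y - v x) < eps) by (eapply Rlt_le_trans; [exact hy| apply Rmin_r]).
    rewrite (Sh y hy1), (Sh x ltac:(rewrite Rminus_diag, Rabs_R0; lra)).
    rabs_h; rabs_g; lra.
  - exists (v x); split; [lra|]. intros y z hy hz hyz. simpl.
    rewrite (Sh y hy), (Sh z hz); lra.
Qed.

Lemma not_both : forall f x, locmono true f x -> locmono false f x -> False.
Proof.
  intros f x [d1 [hd1 H1]] [d2 [hd2 H2]].
  pose proof (vX x) as hx.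
  set (d := Rmin (Rmin d1 d2) (1 - v x) / 2).
  assert (hd : 0 < d /\ d < d1 /\ d < d2 /\ d < 1 - v x) by (unfold d, Rmin; repeat destruct Rle_dec; lra).
  set (z := toX (v x + d/2)).
  assert (hz : v z = v x + d/2) by (apply toX_v; lra).
  assert (a : Rabs (v x - v x) = 0) by (rewrite Rminus_diag; apply Rabs_R0).
  assert (b : Rabs (v z - v x) < d) by (rewrite hz; rabs_g; lra).
  pose proof (H1 x z ltac:(lra) ltac:(lra) ltac:(lra)).
  pose proof (H2 x z ltac:(lra) ltac:(lra) ltac:(lra)). simpl in *; lra.
Qed.
Lemma mixed_false : forall (g ginv : X -> X) (F : list X),
  (forall x, ginv (g x) = x) -> (forall y, g (ginv y) = y) ->
  (forall x, ~ In x F -> cont_at g x) ->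
  normalizes_PCplus g ->
  forall p1 p2, locmono true g p1 -> locmono false g p2 -> False.
Proof.
  intros g ginv F h1 h2 hcF hn p1 p2 L1 L2.
  assert (hne : v p1 <> v p2).
  { intro e; apply Xeq in e; subst; eapply not_both; eauto. }
  destruct L1 as [d1 [hd1 H1]]. destruct L2 as [d2 [hd2 H2]].
  pose proof (vX p1); pose proof (vX p2).
  set (dd := Rabs (v p1 - v p2)).
  assert (hdd : 0 < dd) by (apply Rabs_pos_lt; lra).
  set (e := Rmin (Rmin d1 d2) (Rmin dd (Rmin (1 - v p1) (1 - v p2))) / 4).
  assert (he : 0 < e /\ 4 * e <= d1 /\ 4 * e <= d2 /\ 4 * e <= dd /\ 4 * e <= 1 - v p1 /\ 4 * e <= 1 - v p2).
  { unfold e, Rmin; repeat destruct Rle_dec; lra. }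
  set (a1 := v p1 + e). set (a2 := v p2 + e).
  assert (hdisj : a1 + e <= a2 \/ a2 + e <= a1).
  { unfold a1, a2, dd in *. unfold Rabs in *; destruct Rcase_abs; lra. }
  set (h := swp a1 a2 e).
  assert (hh : PCplus_hat h) by (apply swp_plus; [..|exact hdisj]; unfold a1, a2; lra).
  destruct (hn ginv h1 h2) as [hn1 _].
  destruct (hn1 h hh) as [k [hk [L hL]]].
  destruct (plus_loc k hk) as [L' hL'].
  destruct (avoid_X (F ++ map ginv (L ++ L')) a1 (a1 + e)) as [x [hx hxn]]; unfold a1; try lra.
  assert (hxF : ~ In x F) by (intro; apply hxn; apply in_or_app; auto).
  assert (hxL : ~ In (g x) L).
  { intro hin; apply hxn; apply in_or_app; right; rewrite <- (h1 x); apply in_map, in_or_app; auto. }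
  assert (hxL' : ~ In (g x) L').
  { intro hin; apply hxn; apply in_or_app; right; rewrite <- (h1 x); apply in_map, in_or_app; auto. }
  destruct (hL' (g x) hxL') as [_ [dk [hdk Hk]]].
  destruct (hcF x hxF dk hdk) as [eta [heta Heta]].
  destruct (avoid_X (map ginv L) (v x) (Rmin (v x + eta) (a1 + e))) as [x' [hx' hx'n]].
  { pose proof (vX x); lra. }
  { unfold Rmin; destruct Rle_dec; lra. }
  { unfold a1, Rmin; destruct Rle_dec; lra. }
  assert (hx'2 : v x' < v x + eta /\ v x' < a1 + e).
  { pose proof (Rmin_l (v x + eta) (a1 + e)); pose proof (Rmin_r (v x + eta) (a1 + e)); lra. }
  assert (hx'L : ~ In (g x') L).
  { intro hin; apply hx'n; rewrite <- (h1 x'); apply in_map; auto. }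
  assert (o1 : v (g x) < v (g x')).
  { apply (H1 x x'); try lra; rabs_g; unfold a1 in *; lra. }
  assert (c1 : Rabs (v (g x') - v (g x)) < dk) by (apply Heta; rabs_g; lra).
  assert (o2 : v (k (g x)) < v (k (g x'))).
  { apply (Hk (g x) (g x')); auto. rewrite Rminus_diag, Rabs_R0; lra. }
  rewrite <- (hL (g x) hxL), <- (hL (g x') hx'L) in o2. rewrite !h1 in o2.
  assert (e1 : v (h x) = v x + (a2 - a1)).
  { unfold h; rewrite swp_v; unfold Hs. rewrite (proj2 (inI_true a1 e (v x))) by lra; auto.
    all: first [exact hdisj | unfold a1, a2 in *; lra]. }
  assert (e2 : v (h x') = v x' + (a2 - a1)).
  { unfold h; rewrite swp_v; unfold Hs. rewrite (proj2 (inI_true a1 e (v x'))) by lra; auto.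
    all: first [exact hdisj | unfold a1, a2 in *; lra]. }
  assert (o3 : v (g (h x')) < v (g (h x))).
  { pose proof (H2 (h x) (h x')) as HH. simpl in HH. apply HH; rewrite ?e1, ?e2;
    try (rabs_g; unfold a1, a2 in *; lra); lra. }
  lra.
Qed.

Lemma hard_dir : forall g, PCbow_hat g -> normalizes_PCplus g -> in_PCpm g.
Proof.
  intros g hg hn.
  pose proof hg as [[ginv [h1 h2]] [Fc hc]].
  destruct (bow_loc g hg) as [F hF].
  assert (bg : bij g) by (exists ginv; auto).
  destruct (classic (exists p1, ~ In p1 F /\ locmono true g p1)) as [[p1 [_ m1]]|n1].
  - destruct (classic (exists p2, ~ In p2 F /\ locmono false g p2)) as [[p2 [_ m2]]|n2].
    + exfalso. apply (mixed_false g ginv Fc h1 h2 hc hn p1 p2 m1 m2).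
    + left. apply good_plus_in; auto. exists F. intros x hx.
      destruct (hF x hx) as [c [m|m]]; auto. exfalso; apply n2; eauto.
  - right.
    assert (G : Good false g).
    { exists F. intros x hx. destruct (hF x hx) as [c [m|m]]; auto. exfalso; apply n1; eauto. }
    exists rho, (fun x => rho (g x)). split; [exists rho; split; apply rho_inv|].
    split.
    + exists (x0 :: nil). intros x hx. apply rho_v. intro e. apply hx; left; apply Xeq; simpl; auto.
    + split.
      * apply loc_plus; [apply bij_comp; auto; exists rho; split; apply rho_inv|].
        exact (comp_good false false g ginv rho h1 G rho_good).
      * exists nil. intros x _. rewrite rho_inv; auto.
Qed.

Theorem proposition5p2 :
  forall g : X -> X, PCbow_hat g -> (normalizes_PCplus g <-> in_PCpm g).
Proof.
  intros g hg; split; [apply hard_dir; auto| apply easy_dir; auto].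
Qed.
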